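(* Let $(H,R)$ be a quasitriangular Hopf algebra and $\pi:H\to K$ a surjective Hopf algebra map. Then, identifying $\underline{H}$ with $H$ as vector spaces, $$\{h\in H\mid (\mathrm{id}\otimes\pi)\circ\underline{\Delta}(h)=h\otimes 1\}=H^{co\pi}:=\{h\in H\mid (\mathrm{id}\otimes\pi)\circ\Delta(h)=h\otimes 1\}.$$
   Context: $(H,R)$ quasitriangular means $R=\sum_iR_i\otimes R^i\in H\otimes H$ is invertible with $(\Delta\otimes\mathrm{id})(R)=R_{13}R_{23}$, $(\mathrm{id}\otimes\Delta)(R)=R_{13}R_{12}$, $\tau\Delta(h)=R\Delta(h)R^{-1}$. Sweedler notation $\Delta(h)=h_{(1)}\otimes h_{(2)}$; $\mathrm{ad}_h(a)=h_{(1)}aS(h_{(2)})$. The transmuted comultiplication on $H$ is $\underline{\Delta}(a)=\sum_i a_{(1)}S(R^i)\otimes\mathrm{ad}_{R_i}(a_{(2)})$. *)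

(* Defs.v *)
(* Hopf algebras over a field k, with elements of tensor
   products represented as finite formal sums (Sweedler-style lists of pairs /
   triples) and equality of tensors given by the universal property of the
   tensor product: two formal sums are equal as tensors iff every bilinear
   (resp. trilinear) map into every k-vector space takes the same value on them. *)
From HB Require Import structures.
From mathcomp Require Import all_boot all_order all_algebra.
Set Implicit Arguments. Unset Strict Implicit. Unset Printing Implicit Defensive.
Import GRing.Theory.
Local Open Scope ring_scope.

Section Tensors.
Variable k : fieldType.

Definition bilin (V W U : lmodType k) (B : V -> W -> U) : Prop :=
  (forall (c : k) x x' y, B (c *: x + x') y = c *: B x y + B x' y) /\
  (forall (c : k) x y y', B x (c *: y + y') = c *: B x y + B x y').

Definition trilin (V W X U : lmodType k) (B : V -> W -> X -> U) : Prop :=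
  (forall (c : k) x x' y z, B (c *: x + x') y z = c *: B x y z + B x' y z) /\
  (forall (c : k) x y y' z, B x (c *: y + y') z = c *: B x y z + B x y' z) /\
  (forall (c : k) x y z z', B x y (c *: z + z') = c *: B x y z + B x y z').

Definition teq2 (V W : lmodType k) (s t : seq (V * W)) : Prop :=
  forall (U : lmodType k) (B : V -> W -> U), bilin B ->
    \sum_(p <- s) B p.1 p.2 = \sum_(p <- t) B p.1 p.2.

Definition teq3 (V W X : lmodType k) (s t : seq (V * W * X)) : Prop :=
  forall (U : lmodType k) (B : V -> W -> X -> U), trilin B ->
    \sum_(p <- s) B p.1.1 p.1.2 p.2 = \sum_(p <- t) B p.1.1 p.1.2 p.2.

End Tensors.

Section Hopf.
Variable k : fieldType.

Definition tmul2 (A : algType k) (s t : seq (A * A)) : seq (A * A) :=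
  [seq (p.1 * q.1, p.2 * q.2) | p <- s, q <- t].
Definition tmul3 (A : algType k) (s t : seq (A * A * A)) : seq (A * A * A) :=
  [seq (p.1.1 * q.1.1, p.1.2 * q.1.2, p.2 * q.2) | p <- s, q <- t].
Definition tflip (A : algType k) (s : seq (A * A)) : seq (A * A) :=
  [seq (p.2, p.1) | p <- s].

Record hopf (H : algType k) := Hopf {
  cop : H -> seq (H * H);
  eps : H -> k;
  antipode : H -> H;
  cop_lin : forall (c : k) (a b : H),
    teq2 (cop (c *: a + b)) ([seq (c *: p.1, p.2) | p <- cop a] ++ cop b);
  cop_mul : forall a b : H, teq2 (cop (a * b)) (tmul2 (cop a) (cop b));
  cop_one : teq2 (cop 1) [:: (1, 1)];
  coassoc : forall h : H,
    teq3 [seq (q.1, q.2, p.2) | p <- cop h, q <- cop p.1]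
         [seq (p.1, q.1, q.2) | p <- cop h, q <- cop p.2];
  eps_lin : forall (c : k) (a b : H), eps (c *: a + b) = c * eps a + eps b;
  eps_mul : forall a b : H, eps (a * b) = eps a * eps b;
  eps_one : eps 1 = 1;
  counitl : forall h : H, \sum_(p <- cop h) eps p.1 *: p.2 = h;
  counitr : forall h : H, \sum_(p <- cop h) eps p.2 *: p.1 = h;
  antipode_lin : forall (c : k) (a b : H),
    antipode (c *: a + b) = c *: antipode a + antipode b;
  antipodel : forall h : H, \sum_(p <- cop h) antipode p.1 * p.2 = (eps h)%:A;
  antipoder : forall h : H, \sum_(p <- cop h) p.1 * antipode p.2 = (eps h)%:A
}.

Definition hopf_map (H K : algType k) (HH : hopf H) (HK : hopf K) (pi : H -> K)
  : Prop :=
  [/\ forall (c : k) (a b : H), pi (c *: a + b) = c *: pi a + pi b,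
      forall a b : H, pi (a * b) = pi a * pi b,
      pi 1 = 1,
      forall h : H, teq2 (cop HK (pi h)) [seq (pi p.1, pi p.2) | p <- cop HH h]
    & forall h : H, eps HK (pi h) = eps HH h].

Record quasitriangular (H : algType k) (HH : hopf H) := QT {
  Rm : seq (H * H);
  Rinv : seq (H * H);
  R_invl : teq2 (tmul2 Rm Rinv) [:: (1, 1)];
  R_invr : teq2 (tmul2 Rinv Rm) [:: (1, 1)];
  (* (Delta (x) id)(R) = R13 R23 *)
  R_copl : teq3 [seq (q.1, q.2, p.2) | p <- Rm, q <- cop HH p.1]
                (tmul3 [seq (p.1, 1, p.2) | p <- Rm] [seq (1, p.1, p.2) | p <- Rm]);
  (* (id (x) Delta)(R) = R13 R12 *)
  R_copr : teq3 [seq (p.1, q.1, q.2) | p <- Rm, q <- cop HH p.2]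
                (tmul3 [seq (p.1, 1, p.2) | p <- Rm] [seq (p.1, p.2, 1) | p <- Rm]);
  (* tau Delta(h) = R Delta(h) R^-1 *)
  R_braid : forall h : H,
    teq2 (tflip (cop HH h)) (tmul2 (tmul2 Rm (cop HH h)) Rinv)
}.

Definition adj (H : algType k) (HH : hopf H) (x y : H) : H :=
  \sum_(p <- cop HH x) p.1 * y * antipode HH p.2.

(* transmuted comultiplication: a_(1) S(R^i) (x) ad_{R_i}(a_(2)) *)
Definition tcop (H : algType k) (HH : hopf H) (Q : quasitriangular HH) (a : H)
  : seq (H * H) :=
  [seq (q.1 * antipode HH r.2, adj HH r.1 q.2) | q <- cop HH a, r <- Rm Q].

Definition id_pi (H K : algType k) (pi : H -> K) (s : seq (H * H)) : seq (H * K) :=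
  [seq (p.1, pi p.2) | p <- s].

End Hopf.

(* Main.v *)
Require Import Defs.
From HB Require Import structures.
From mathcomp Require Import all_boot all_order all_algebra.
Set Implicit Arguments. Unset Strict Implicit. Unset Printing Implicit Defensive.
Import GRing.Theory.
Local Open Scope ring_scope.

Section Lin.
Variable k : fieldType.

Definition linf (V W : lmodType k) (f : V -> W) :=
  forall (c : k) a b, f (c *: a + b) = c *: f a + f b.

Lemma linf0 (V W : lmodType k) (f : V -> W) : linf f -> f 0 = 0.
Proof.
move=> hf; have := hf (-1) 0 0; rewrite scaler0 addr0 scaleN1r.
by move=> ->; rewrite addNr.
Qed.

Lemma linfD (V W : lmodType k) (f : V -> W) : linf f -> forall a b, f (a + b) = f a + f b.
Proof. by move=> hf a b; rewrite -[a]scale1r hf !scale1r. Qed.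

Lemma linfZ (V W : lmodType k) (f : V -> W) : linf f -> forall c a, f (c *: a) = c *: f a.
Proof. by move=> hf c a; rewrite -[c *: a]addr0 hf linf0 // addr0. Qed.

Lemma linf_sum (V W : lmodType k) (f : V -> W) (I : Type) (s : seq I) (F : I -> V) :
  linf f -> f (\sum_(i <- s) F i) = \sum_(i <- s) f (F i).
Proof.
move=> hf; elim: s => [|x s IH]; first by rewrite !big_nil linf0.
by rewrite !big_cons linfD // IH.
Qed.

Lemma linf_comp (U V W : lmodType k) (f : V -> W) (g : U -> V) :
  linf f -> linf g -> linf (fun x => f (g x)).
Proof. by move=> hf hg c a b; rewrite hg hf. Qed.

Lemma linf_id (V : lmodType k) : linf (fun x : V => x).
Proof. by []. Qed.

Lemma linf_mulr (A : algType k) (a : A) : linf (fun x : A => x * a).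
Proof. by move=> c x y; rewrite mulrDl scalerAl. Qed.

Lemma linf_mull (A : algType k) (a : A) : linf (fun x : A => a * x).
Proof. by move=> c x y; rewrite mulrDr scalerAr. Qed.

Lemma bilin_comp (U V W V' W' : lmodType k) (B : V -> W -> U) (f : V' -> V) (g : W' -> W) :
  bilin B -> linf f -> linf g -> bilin (fun x y => B (f x) (g y)).
Proof.
move=> [h1 h2] hf hg; split=> c x x' y; first by rewrite hf h1.
by rewrite hg h2.
Qed.

Lemma bilin_sum (U V W : lmodType k) (I : Type) (s : seq I) (F : I -> V -> W -> U) :
  (forall i, bilin (F i)) -> bilin (fun x y => \sum_(i <- s) F i x y).
Proof.
move=> hF; split=> c x x' y.
  rewrite scaler_sumr -big_split /=; apply: eq_bigr => i _; by case: (hF i) => ->.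
rewrite scaler_sumr -big_split /=; apply: eq_bigr => i _; by case: (hF i) => _ ->.
Qed.

Lemma bilin_l (U V W : lmodType k) (B : V -> W -> U) y : bilin B -> linf (fun x => B x y).
Proof. by case=> h1 _ c x x'; rewrite h1. Qed.
Lemma bilin_r (U V W : lmodType k) (B : V -> W -> U) x : bilin B -> linf (fun y => B x y).
Proof. by case=> _ h2 c y y'; rewrite h2. Qed.


Lemma bilin_from (U V W : lmodType k) (B : V -> W -> U) :
  (forall y, linf (fun x => B x y)) -> (forall x, linf (B x)) -> bilin B.
Proof. by move=> h1 h2; split=> c x x' y; [rewrite h1 | rewrite h2]. Qed.

Lemma trilin_from (U V W X : lmodType k) (C : V -> W -> X -> U) :
  (forall y z, linf (fun x => C x y z)) -> (forall x z, linf (fun y => C x y z)) ->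
  (forall x y, linf (C x y)) -> trilin C.
Proof.
move=> h1 h2 h3; split; first by move=> c x x' y z; rewrite h1.
by split=> c x y y' z; rewrite ?h2 ?h3.
Qed.

Lemma linf_scale (V : lmodType k) (W : lmodType k) (e : V -> k) (w : W) :
  (forall c a b, e (c *: a + b) = c * e a + e b) -> linf (fun x => e x *: w).
Proof. by move=> he c a b; rewrite he scalerDl scalerA. Qed.

Lemma linf_scale2 (V W : lmodType k) (c : k) (f : V -> W) : linf f -> linf (fun x => c *: f x).
Proof. by move=> hf a x y; rewrite hf scalerDr !scalerA mulrC. Qed.

Lemma linf_lr (A : algType k) (a b : A) : linf (fun x : A => a * x * b).
Proof. by move=> t x y; rewrite ?mulrDr ?mulrDl -?scalerAr -?scalerAl -?scalerAl. Qed.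
Lemma linf_rr (A : algType k) (a b : A) : linf (fun x : A => x * a * b).
Proof. by move=> t x y; rewrite ?mulrDr ?mulrDl -?scalerAr -?scalerAl -?scalerAl. Qed.
Lemma linf_sumf (V W : lmodType k) (I : Type) (s : seq I) (F : I -> V -> W) :
  (forall i, linf (F i)) -> linf (fun x => \sum_(i <- s) F i x).
Proof.
move=> hF c a b; rewrite scaler_sumr -big_split /=; apply: eq_bigr => i _; exact: hF.
Qed.

End Lin.

Section HopfFacts.
Variables (k : fieldType) (H : algType k) (HH : hopf H).
Local Notation S := (antipode HH).
Local Notation D := (cop HH).
Local Notation e := (eps HH).

Lemma S_lin : linf S.
Proof. exact: antipode_lin. Qed.

Lemma e0 : e 0 = 0.
Proof. have := eps_lin HH (-1) 0 0; rewrite scaler0 addr0 => ->; by rewrite mulN1r addNr. Qed.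

Lemma eD a b : e (a + b) = e a + e b.
Proof. by have := eps_lin HH 1 a b; rewrite scale1r mul1r. Qed.

Lemma e_sum (I : Type) (s : seq I) (F : I -> H) : e (\sum_(i <- s) F i) = \sum_(i <- s) e (F i).
Proof.
elim: s => [|x s IH]; first by rewrite !big_nil e0.
by rewrite !big_cons eD IH.
Qed.

Lemma eZ c a : e (c *: a) = c * e a.
Proof.
by rewrite -[c *: a]addr0 eps_lin e0 addr0.
Qed.

Lemma copB (U : lmodType k) (B : H -> H -> U) : bilin B ->
  linf (fun x => \sum_(p <- D x) B p.1 p.2).
Proof.
move=> hB c a b; rewrite (cop_lin HH c a b hB) big_cat big_map /= scaler_sumr.
congr (_ + _); apply: eq_bigr => p _; exact: (linfZ (bilin_l _ hB)).
Qed.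

Lemma copM (U : lmodType k) (B : H -> H -> U) : bilin B -> forall a b,
  \sum_(p <- D (a * b)) B p.1 p.2 =
  \sum_(p <- D a) \sum_(q <- D b) B (p.1 * q.1) (p.2 * q.2).
Proof. by move=> hB a b; rewrite (cop_mul HH a b hB) /tmul2 big_allpairs_dep. Qed.

Lemma cop1 (U : lmodType k) (B : H -> H -> U) : bilin B ->
  \sum_(p <- D 1) B p.1 p.2 = B 1 1.
Proof. by move=> hB; rewrite (cop_one HH hB) big_seq1. Qed.

Lemma coassB (U : lmodType k) (C : H -> H -> H -> U) : trilin C -> forall h,
  \sum_(p <- D h) \sum_(q <- D p.1) C q.1 q.2 p.2 =
  \sum_(p <- D h) \sum_(q <- D p.2) C p.1 q.1 q.2.
Proof.
move=> hC h; have := coassoc HH h hC; rewrite !big_allpairs_dep /=; exact.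
Qed.

Lemma S1 : S 1 = 1.
Proof.
have hB : bilin (fun x y : H => S x * y).
  by apply: bilin_from => [y|x]; [exact: (linf_comp (linf_mulr y) S_lin)|apply: linf_mull].
have := antipodel HH 1; rewrite (cop1 hB) eps_one mulr1 => ->; by rewrite scale1r.
Qed.

Ltac lintac := move=> ? ? ?; do ![rewrite mulrDr | rewrite mulrDl | rewrite -scalerAr | rewrite -scalerAl | rewrite S_lin]; try done.

Lemma sum_counitr (V : lmodType k) (L : H -> V) h : linf L ->
  \sum_(p <- D h) e p.2 *: L p.1 = L h.
Proof.
move=> hL; rewrite -[in RHS](counitr HH h) linf_sum //.
by apply: eq_bigr => p _; rewrite linfZ.
Qed.

Lemma sum_counitl (V : lmodType k) (L : H -> V) h : linf L ->
  \sum_(p <- D h) e p.1 *: L p.2 = L h.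
Proof.
move=> hL; rewrite -[in RHS](counitl HH h) linf_sum //.
by apply: eq_bigr => p _; rewrite linfZ.
Qed.

Lemma sum_antipoder (V : lmodType k) (L : H -> V) x : linf L ->
  \sum_(q <- D x) L (q.1 * S q.2) = e x *: L 1.
Proof. by move=> hL; rewrite -linf_sum // antipoder linfZ. Qed.

Lemma sum_antipodel (V : lmodType k) (L : H -> V) x : linf L ->
  \sum_(q <- D x) L (S q.1 * q.2) = e x *: L 1.
Proof. by move=> hL; rewrite -linf_sum // antipodel linfZ. Qed.

Lemma lin3 (a b c : H) : linf (fun x : H => a * x * b * c).
Proof. by move=> t x y; rewrite ?mulrDr ?mulrDl -?scalerAr -?scalerAl -?scalerAl. Qed.
Lemma lin2 (a b : H) : linf (fun x : H => a * x * b).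
Proof. by move=> t x y; rewrite ?mulrDr ?mulrDl -?scalerAr -?scalerAl -?scalerAl. Qed.

Lemma stepA a b :
  \sum_(p <- D a) \sum_(q <- D p.1) S (q.1 * b) * q.2 * S p.2 = S (a * b).
Proof.
have hC : trilin (fun u v w : H => S (u * b) * v * S w).
  by apply: trilin_from => *; lintac.
rewrite (coassB hC).
transitivity (\sum_(p <- D a) e p.2 *: S (p.1 * b)).
  apply: eq_bigr => p _.
  have := sum_antipoder p.2 (lin2 (S (p.1 * b)) 1).
  rewrite !mulr1 => <-. apply: eq_big_seq => q _. by rewrite !mulrA mulr1.
exact: (sum_counitr a (linf_comp S_lin (linf_mulr b))).
Qed.

Lemma Smul a b : S (a * b) = S b * S a.
Proof.
pose X := \sum_(p <- D a) \sum_(q <- D p.1) \sum_(p' <- D b) \sum_(q' <- D p'.1)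
   S (q.1 * q'.1) * (q.2 * q'.2) * (S p'.2 * S p.2).
transitivity X.
  rewrite /X -stepA; apply: eq_big_seq => p _; apply: eq_big_seq => q _.
  have hC : trilin (fun u v w : H => S (q.1 * u) * (q.2 * v) * (S w * S p.2)).
    by apply: trilin_from => *; lintac.
  rewrite (coassB hC) /=.
  have hL : linf (fun x => S (q.1 * x) * q.2 * 1 * S p.2) by lintac.
  rewrite -[S (q.1 * b) * q.2]mulr1 -(sum_counitr b hL) /=; apply: eq_big_seq => p' _.
  rewrite -(sum_antipoder p'.2 (lin2 (S (q.1 * p'.1) * q.2) (S p.2))).
  by apply: eq_big_seq => q' _; rewrite !mulrA.
rewrite /X.
transitivity (\sum_(p <- D a) e p.1 *: (S b * S p.2)); last first.
  by apply: (sum_counitl a (linf_comp (linf_mull _) S_lin)).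
apply: eq_big_seq => p _; rewrite exchange_big /=.
rewrite -(sum_counitl b (linf_comp (linf_mulr _) S_lin)) scaler_sumr.
apply: eq_big_seq => p' _.
have hB : bilin (fun u v : H => S u * v * (S p'.2 * S p.2)).
  by apply: bilin_from => *; lintac.
rewrite -(copM hB) (sum_antipodel (p.1 * p'.1) (linf_mulr _)) eps_mul mul1r.
by rewrite scalerA mulrC.
Qed.


Lemma linf_e (V : lmodType k) (w : V) (c : H) : linf (fun x => e (x * c) *: w).
Proof.
by apply: linf_scale => t x y; rewrite mulrDl -scalerAl eps_lin.
Qed.

Lemma bilin_ey (a : H) : bilin (fun x y : H => e x *: (a * y)).
Proof.
apply: bilin_from => [y|x]; first by apply: linf_scale; apply: eps_lin.
exact: (linf_scale2 _ (linf_mull a)).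
Qed.

End HopfFacts.

Section QTFacts.
Variables (k : fieldType) (H : algType k) (HH : hopf H) (Q : quasitriangular HH).
Local Notation S := (antipode HH).
Local Notation D := (cop HH).
Local Notation e := (eps HH).
Local Notation R := (Rm Q).
Local Notation Ri := (Rinv Q).

Lemma Rinvl_sum (U : lmodType k) (B : H -> H -> U) : bilin B ->
  \sum_(p <- R) \sum_(q <- Ri) B (p.1 * q.1) (p.2 * q.2) = B 1 1.
Proof. by move=> hB; have := R_invl Q hB; rewrite /tmul2 big_allpairs_dep big_seq1. Qed.

Lemma Rinvr_sum (U : lmodType k) (B : H -> H -> U) : bilin B ->
  \sum_(q <- Ri) \sum_(p <- R) B (q.1 * p.1) (q.2 * p.2) = B 1 1.
Proof. by move=> hB; have := R_invr Q hB; rewrite /tmul2 big_allpairs_dep big_seq1. Qed.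

Definition uR := \sum_(p <- R) e p.1 *: p.2.

Lemma Rstep (U : lmodType k) (B : H -> H -> U) : bilin B ->
  \sum_(p <- R) B p.1 p.2 = \sum_(p <- R) B p.1 (uR * p.2).
Proof.
move=> hB.
have hC : trilin (fun x y z => e x *: B y z).
  apply: trilin_from => [y z|x z|x y].
  - by apply: linf_scale; apply: eps_lin.
  - exact: (linf_scale2 _ (bilin_l _ hB)).
  - exact: (linf_scale2 _ (bilin_r _ hB)).
have := R_copl Q hC; rewrite /tmul3 !big_allpairs_dep big_map /=.
move=> E.
transitivity (\sum_(p <- R) \sum_(q <- D p.1) e q.1 *: B q.2 p.2).
  apply: eq_big_seq => p _; by rewrite (sum_counitl HH p.1 (bilin_l p.2 hB)).
rewrite E; under eq_bigr do rewrite big_map /=.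
rewrite exchange_big /=; apply: eq_big_seq => q _.
rewrite /uR mulr_suml (linf_sum _ _ (bilin_r q.1 hB)).
by apply: eq_big_seq => p _; rewrite mulr1 mul1r -scalerAl (linfZ (bilin_r q.1 hB)).
Qed.

Lemma uR1 : uR = 1.
Proof.
pose B := fun x y : H => \sum_(r <- Ri) e (x * r.1) *: (y * r.2).
have hB : bilin B.
  apply: bilin_sum => r; apply: bilin_from => [y|x].
    exact: linf_e.
  exact: (linf_scale2 _ (linf_mulr _)).
have E := Rstep hB; rewrite /B /= in E.
have L1 := Rinvl_sum (bilin_ey HH 1); rewrite /= in L1.
have L2 := Rinvl_sum (bilin_ey HH uR); rewrite /= in L2.
have : 1 = uR.
  transitivity (e 1 *: (1 * (1 : H))); first by rewrite eps_one scale1r mulr1.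
  rewrite -L1.
  transitivity (\sum_(p <- R) \sum_(r <- Ri) e (p.1 * r.1) *: (p.2 * r.2)).
    by apply: eq_big_seq => p _; apply: eq_big_seq => r _; rewrite mul1r.
  rewrite E.
  transitivity (e 1 *: (uR * 1)); last by rewrite eps_one scale1r mulr1.
  rewrite -L2; apply: eq_big_seq => p _; apply: eq_big_seq => r _; by rewrite mulrA.
by move=> ->.
Qed.

Definition vR := \sum_(q <- Ri) e q.1 *: q.2.

Lemma vR1 : vR = 1.
Proof.
have L := Rinvr_sum (bilin_ey HH 1); rewrite /= eps_one scale1r mulr1 in L.
rewrite -L; transitivity (vR * uR); first by rewrite uR1 mulr1.
rewrite /vR /uR mulr_suml.
apply: eq_big_seq => q _; rewrite mulr_sumr; apply: eq_big_seq => p _.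
by rewrite mul1r eps_mul -scalerAl -scalerAr scalerA.
Qed.

End QTFacts.

Section Main.
Variables (k : fieldType) (H K : algType k) (HH : hopf H) (HK : hopf K)
  (Q : quasitriangular HH) (pi : H -> K).
Hypothesis plin : linf pi.
Hypothesis pmul : forall a b : H, pi (a * b) = pi a * pi b.
Hypothesis p1 : pi 1 = 1.
Local Notation S := (antipode HH).
Local Notation D := (cop HH).
Local Notation e := (eps HH).

Lemma pi_adj x y : pi (adj HH x y) = \sum_(s <- D x) pi s.1 * pi y * pi (S s.2).
Proof. rewrite /adj (linf_sum _ _ plin); apply: eq_big_seq => s _; by rewrite !pmul. Qed.

Variables (U : lmodType k) (B0 : H -> K -> U).
Hypothesis hB0 : bilin B0.

Definition G (L : seq (H * H)) x y :=
  \sum_(r <- L) \sum_(s <- D r.1) B0 (x * S r.2) (pi s.1 * y * pi (S s.2)).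

Lemma G_bilin L : bilin (G L).
Proof.
apply: bilin_sum => r; apply: bilin_sum => s.
exact: (bilin_comp hB0 (linf_mulr (S r.2)) (linf_lr (pi s.1) (pi (S s.2)))).
Qed.

Lemma G_1 L h : G L h 1 = B0 (h * S (\sum_(r <- L) e r.1 *: r.2)) 1.
Proof.
rewrite /G.
have hL : linf (fun x => B0 (h * S x) 1).
  exact: (linf_comp (bilin_l 1 hB0) (linf_comp (linf_mull h) (@S_lin _ _ HH))).
rewrite (linf_sum _ _ hL); apply: eq_big_seq => r _.
rewrite (linfZ hL).
transitivity (B0 (h * S r.2) (pi (\sum_(s <- D r.1) s.1 * S s.2))).
  rewrite (linf_sum _ _ plin) (linf_sum _ _ (bilin_r _ hB0)).
  by apply: eq_big_seq => s _; rewrite mulr1 pmul.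
by rewrite antipoder (linfZ plin) p1 (linfZ (bilin_r _ hB0)).
Qed.

Lemma LHS_form (U' : lmodType k) (B : H -> K -> U') h : \sum_(p <- id_pi pi (tcop Q h)) B p.1 p.2 =
  \sum_(p <- D h) \sum_(r <- Rm Q) B (p.1 * S r.2) (pi (adj HH r.1 p.2)).
Proof. by rewrite /id_pi /tcop big_map big_allpairs_dep. Qed.

Lemma back h : teq2 (id_pi pi (D h)) [:: (h, 1)] ->
  \sum_(p <- id_pi pi (tcop Q h)) B0 p.1 p.2 = B0 h 1.
Proof.
move=> hc; have := hc _ _ (G_bilin (Rm Q)).
have u1 := uR1 Q; rewrite /uR in u1.
rewrite /id_pi big_map big_seq1 /= G_1 u1 S1 mulr1 => <-.
rewrite LHS_form; apply: eq_big_seq => p _; rewrite /G; apply: eq_big_seq => r _.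
by rewrite pi_adj (linf_sum _ _ (bilin_r _ hB0)).
Qed.

Lemma fwd h : (forall (U' : lmodType k) (B : H -> K -> U'), bilin B ->
     \sum_(p <- id_pi pi (tcop Q h)) B p.1 p.2 = B h 1) ->
  \sum_(p <- D h) B0 p.1 (pi p.2) = B0 h 1.
Proof.
move=> ht; have := ht _ _ (G_bilin (Rinv Q)).
have v1 := vR1 Q; rewrite /vR in v1.
rewrite LHS_form G_1 v1 S1 mulr1 => <-.
apply: eq_big_seq => p _.
pose Phi a c := \sum_(w <- D a) B0 (p.1 * S c) (pi w.1 * pi p.2 * pi (S w.2)).
have hBc : forall c, bilin (fun u v => B0 (p.1 * S c) (pi u * pi p.2 * pi (S v))).
  move=> c; apply: bilin_from => [v|u].
    exact: (linf_comp (bilin_r _ hB0) (linf_comp (linf_rr (pi p.2) (pi (S v))) plin)).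
  exact: (linf_comp (bilin_r _ hB0) (linf_comp (linf_mull (pi u * pi p.2)) (linf_comp plin (@S_lin _ _ HH)))).
have hPhi : bilin Phi.
  apply: bilin_from => [c|a].
    by rewrite /Phi; exact: (copB HH (hBc c)).
  apply: linf_sumf => w.
  exact: (linf_comp (bilin_l _ hB0) (linf_comp (linf_mull p.1) (@S_lin _ _ HH))).
transitivity (\sum_(q <- Rinv Q) \sum_(r <- Rm Q) Phi (q.1 * r.1) (q.2 * r.2)).
  rewrite (Rinvr_sum Q hPhi) /Phi (cop1 HH (hBc 1)) S1 p1 !mulr1 mul1r.
  by [].
rewrite exchange_big /=; apply: eq_big_seq => r _; rewrite /G; apply: eq_big_seq => q _.
rewrite /Phi (copM HH (hBc _)) pi_adj; apply: eq_big_seq => w _.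
rewrite (linf_sum _ _ (linf_comp (bilin_r _ hB0) (linf_lr (pi w.1) (pi (S w.2))))).
apply: eq_big_seq => s _.
by rewrite Smul !pmul Smul !pmul !mulrA.
Qed.

End Main.

Theorem mainTheorem2 (k : fieldType) (H K : algType k)
  (HH : hopf H) (HK : hopf K) (Q : quasitriangular HH) (pi : H -> K) :
  hopf_map HH HK pi ->
  (forall y : K, exists x : H, pi x = y) ->
  forall h : H,
    teq2 (id_pi pi (tcop Q h)) [:: (h, 1 : K)] <->
    teq2 (id_pi pi (cop HH h)) [:: (h, 1 : K)].
Proof.
move=> [plin pmul p1 _ _] _ h; split.
  move=> ht U B hB; rewrite /id_pi big_map big_seq1 /=.
  apply: (fwd (Q:=Q) plin pmul p1 hB) => U' B' hB'; by rewrite (ht U' B' hB') big_seq1.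
move=> hc U B hB; rewrite big_seq1 /=; exact: (back Q plin pmul p1 hB).
Qed.
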